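(* Let $\alpha:\mathscr{F}\to\mathscr{F}'$ be a strict homomorphism of frames with $S=S'$ (and $\alpha$ the identity of $S$), where $\mathscr{F}=(S,I,R,\sigma,\sigma_1)$ and $\mathscr{F}'=(S,I',R',\sigma',\sigma_1')$. Then $R\to R'$ is surjective and $I\subseteq I'$. Moreover, windows $\mathscr{P}$ over $\mathscr{F}$ are equivalent to pairs consisting of a window $\mathscr{P}'=(P',Q',F',F_1')$ over $\mathscr{F}'$ and a direct summand $V$ of the $R$-module $P'/IP'$ lifting the Hodge filtration of $\mathscr{P}'$, via the functor $\mathscr{P}\mapsto(\alpha_*\mathscr{P},Q/IP)$.
   Context: A frame is $(S,I,R,\sigma,\sigma_1)$ with $R=S/I$, $\sigma$ a ring endomorphism, $\sigma_1:I\to S$ $\sigma$-linear, $I+pS\subseteq\mathrm{Rad}(S)$, $\sigma(a)\equiv a^p\bmod pS$, $\sigma_1(I)$ generating $S$. A window is $(P,Q,F,F_1)$ with $P$ a f.g. projective $S$-module, $Q\subseteq P$, $F:P\to P$, $F_1:Q\to P$ $\sigma$-linear, $P=L\oplus T$ with $Q=L\oplus IT$ for some $L,T$, $F_1(ax)=\sigma_1(a)F(x)$ for $a\in I$, $x\in P$, and $F_1(Q)$ generating $P$; morphisms are $S$-linear maps preserving $Q$ and commuting with $F,F_1$. A strict homomorphism of frames is a ring map $\alpha$ with $\alpha(I)\subseteq I'$, $\sigma'\alpha=\alpha\sigma$, $\sigma_1'\alpha=\alpha\sigma_1$; $\alpha_*$ denotes base change of windows (universal window over $\mathscr{F}'$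 receiving a map compatible with $Q$, $F$, $F_1$). The Hodge filtration of $\mathscr{P}'$ is $Q'/I'P'\subseteq P'/I'P'$; a lift of it is a direct summand $V\subseteq P'/IP'$ whose image under $P'/IP'\to P'/I'P'$ equals $Q'/I'P'$. Morphisms of pairs are window morphisms whose induced map on $P'/IP'$ carries $V$ into $V$. *)

(* Defs.v *)
From HB Require Import structures.
From mathcomp Require Import all_boot all_order all_algebra.
Set Implicit Arguments. Unset Strict Implicit. Unset Printing Implicit Defensive.
Import GRing.Theory.
Local Open Scope ring_scope.

Definition slin (S : comUnitRingType) (U V : lmodType S) (f : U -> V) : Prop :=
  forall (a : S) (x y : U), f (a *: x + y) = a *: f x + f y.

Definition submod (S : comUnitRingType) (V : lmodType S) (U : V -> Prop) : Prop :=
  U 0 /\ forall (a : S) (x y : V), U x -> U y -> U (a *: x + y).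

Definition is_ideal (S : comUnitRingType) (I : S -> Prop) : Prop :=
  I 0 /\ (forall x y, I x -> I y -> I (x + y)) /\ (forall a x, I x -> I (a * x)).

Definition ideal_mul (S : comUnitRingType) (V : lmodType S)
    (I : S -> Prop) (T : V -> Prop) (x : V) : Prop :=
  exists (n : nat) (a : 'I_n -> S) (t : 'I_n -> V),
    (forall i, I (a i) /\ T (t i)) /\ x = \sum_(i < n) a i *: t i.

Definition in_jacobson (S : comUnitRingType) (x : S) : Prop :=
  forall y : S, (1 - x * y) \is a GRing.unit.

Definition fg_projective (S : comUnitRingType) (P : lmodType S) : Prop :=
  exists (n : nat) (i : P -> 'rV[S]_n) (r : 'rV[S]_n -> P),
    slin i /\ slin r /\ forall x, r (i x) = x.

(* A frame (S, I, R = S/I, sigma, sigma_1) for the fixed prime p.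
   sigma_1 : I -> S is represented by a function S -> S of which only the
   values on I matter. *)
Record frame (S : comUnitRingType) (p : nat) := Frame {
  fI : S -> Prop;
  fsigma : {rmorphism S -> S};
  fsigma1 : S -> S;
  fI_ideal : is_ideal fI;
  fsigma1_lin : forall (a x y : S), fI x -> fI y ->
      fsigma1 (a * x + y) = fsigma a * fsigma1 x + fsigma1 y;
  frad : forall a b : S, fI a -> in_jacobson (a + p%:R * b);
  ffrob : forall a : S, exists b : S, fsigma a - a ^+ p = p%:R * b;
  fgen : exists (n : nat) (c : 'I_n -> S) (x : 'I_n -> S),
      (forall i, fI (x i)) /\ \sum_(i < n) c i * fsigma1 (x i) = 1
}.

Definition strict_id_hom (S : comUnitRingType) (p : nat) (F F' : frame S p) : Prop :=
  (forall a, fI F a -> fI F' a) /\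
  (forall a, fsigma F' a = fsigma F a) /\
  (forall a, fI F a -> fsigma1 F' a = fsigma1 F a).

(* The natural map R = S/I -> R' = S/I' (class of s |-> class of s) is
   well defined (I included in I') and surjective. *)
Definition quot_map_wd_surj (S : comUnitRingType) (I I' : S -> Prop) : Prop :=
  (forall a, I a -> I' a) /\ (forall s' : S, exists s : S, I' (s - s')).

(* A window (P, Q, F, F_1) over the frame Fr.  F_1 : Q -> P is represented
   by a function P -> P of which only the values on Q matter. *)
Record window (S : comUnitRingType) (p : nat) (Fr : frame S p) := Window {
  wP : lmodType S;
  wQ : wP -> Prop;
  wF : wP -> wP;
  wF1 : wP -> wP;
  wP_fgproj : fg_projective wP;
  wF_lin : forall (a : S) (x y : wP),
      wF (a *: x + y) = fsigma Fr a *: wF x + wF y;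
  wF1_lin : forall (a : S) (x y : wP), wQ x -> wQ y ->
      wF1 (a *: x + y) = fsigma Fr a *: wF1 x + wF1 y;
  wdecomp : exists L T : wP -> Prop,
      submod L /\ submod T /\
      (forall x, exists l t, L l /\ T t /\ x = l + t) /\
      (forall l t, L l -> T t -> l + t = 0 -> l = 0 /\ t = 0) /\
      (forall x, wQ x <-> exists l t, L l /\ ideal_mul (fI Fr) T t /\ x = l + t);
  wF1_F : forall (a : S) (x : wP), fI Fr a ->
      wF1 (a *: x) = fsigma1 Fr a *: wF x;
  wF1_gen : forall x : wP, exists (n : nat) (c : 'I_n -> S) (q : 'I_n -> wP),
      (forall i, wQ (q i)) /\ x = \sum_(i < n) c i *: wF1 (q i)
}.

Arguments wQ {S p Fr} w _.
Arguments wF {S p Fr} w _.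
Arguments wF1 {S p Fr} w _.
Arguments wP {S p Fr} w.

(* For
   Fr1 = Fr2 these are exactly the window morphisms; for Fr1 -> Fr2 a strict
   homomorphism with alpha = id these are the maps used to define base
   change alpha_*. *)
Definition wmap (S : comUnitRingType) (p : nat) (Fr1 Fr2 : frame S p)
    (P1 : window Fr1) (P2 : window Fr2) (u : wP P1 -> wP P2) : Prop :=
  slin u /\
  (forall x, wQ P1 x -> wQ P2 (u x)) /\
  (forall x, u (wF P1 x) = wF P2 (u x)) /\
  (forall x, wQ P1 x -> u (wF1 P1 x) = wF1 P2 (u x)).

(* (P', u) is a base change alpha_* P of P along alpha = id : F -> F':
   the universal window over F' receiving a compatible map from P. *)
Definition is_base_change (S : comUnitRingType) (p : nat) (F F' : frame S p)
    (P : window F) (P' : window F') (u : wP P -> wP P') : Prop :=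
  wmap u /\
  forall (P'' : window F') (v : wP P -> wP P''), wmap v ->
    (exists w : wP P' -> wP P'', wmap w /\ forall x, w (u x) = v x) /\
    (forall w1 w2 : wP P' -> wP P'', wmap w1 -> wmap w2 ->
       (forall x, w1 (u x) = v x) -> (forall x, w2 (u x) = v x) ->
       forall y, w1 y = w2 y).

(* Submodules V of P'/IP' are encoded by their preimages W in P'
   (submodules of P' containing IP').
   lifts_hodge I P' W : V = W/IP' is a direct summand of the R-module P'/IP'
   whose image in P'/I'P' equals the Hodge filtration Q'/I'P'. *)
Definition lifts_hodge (S : comUnitRingType) (p : nat) (I : S -> Prop)
    (F' : frame S p) (P' : window F') (W : wP P' -> Prop) : Prop :=
  let IP' := ideal_mul I (fun _ : wP P' => True) in
  let I'P' := ideal_mul (fI F') (fun _ : wP P' => True) in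
  submod W /\ (forall x, IP' x -> W x) /\
  (exists W' : wP P' -> Prop,
      submod W' /\ (forall x, IP' x -> W' x) /\
      (forall x, exists w w', W w /\ W' w' /\ x = w + w') /\
      (forall x, W x -> W' x -> IP' x)) /\
  (forall x, wQ P' x <-> exists w z, W w /\ I'P' z /\ x = w + z).

Definition pair_hom (S : comUnitRingType) (p : nat) (F' : frame S p)
    (P1' P2' : window F') (W1 : wP P1' -> Prop) (W2 : wP P2' -> Prop)
    (g : wP P1' -> wP P2') : Prop :=
  wmap g /\ forall x, W1 x -> W2 (g x).

(* preimage in P' of the image of Q/IP under P/IP -> P'/IP' induced by the
   base change map u : P -> P'; i.e. the pair component "Q/IP" of the functor *)
Definition hodge_image (S : comUnitRingType) (p : nat) (F F' : frame S p)
    (P : window F) (P' : window F') (u : wP P -> wP P') (x : wP P') : Prop :=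
  exists q z, wQ P q /\ ideal_mul (fI F) (fun _ : wP P' => True) z /\ x = u q + z.

Arguments is_base_change {S p F F'} P P' u.
Arguments hodge_image {S p F F'} P {P'} u x.
Arguments lifts_hodge {S p} I {F'} P' W.
Arguments pair_hom {S p F' P1' P2'} W1 W2 g.
Arguments wmap {S p Fr1 Fr2 P1 P2} u.
Arguments strict_id_hom {S p} F F'.

(* Main.v *)
Require Import Defs.
From HB Require Import structures.
From mathcomp Require Import all_boot all_order all_algebra.
From mathcomp Require Import perm.
Set Implicit Arguments. Unset Strict Implicit. Unset Printing Implicit Defensive.
From Stdlib Require Import IndefiniteDescription.
Import GRing.Theory.
Local Open Scope ring_scope.

Section Ideal.
Variable S : comUnitRingType.
Variable I : S -> Prop.
Hypothesis hI : is_ideal I.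

Lemma id0 : I 0. Proof. exact: hI.1. Qed.
Lemma idD x y : I x -> I y -> I (x + y). Proof. exact: hI.2.1. Qed.
Lemma idM a x : I x -> I (a * x). Proof. exact: hI.2.2. Qed.
Lemma idMr a x : I x -> I (x * a). Proof. by rewrite mulrC; apply: idM. Qed.
Lemma idN x : I x -> I (- x).
Proof. by move=> h; rewrite -mulN1r; apply: idM. Qed.
Lemma idB x y : I x -> I y -> I (x - y).
Proof. by move=> hx hy; apply: idD => //; apply: idN. Qed.
Lemma id_sum n (f : 'I_n -> S) : (forall i, I (f i)) -> I (\sum_i f i).
Proof.
move=> h; elim/big_ind: _ => //; [exact: id0| exact: idD].
Qed.
End Ideal.

Section Lin.
Variable S : comUnitRingType.
Variables U V : lmodType S.
Variable f : U -> V.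
Hypothesis hf : slin f.
Lemma slin0 : f 0 = 0.
Proof. have h := hf 1 0 0; rewrite scale1r !addr0 scale1r in h.
by apply: (@addIr _ (f 0)); rewrite add0r -h. Qed.
Lemma slinD x y : f (x + y) = f x + f y.
Proof. by have := hf 1 x y; rewrite !scale1r. Qed.
Lemma slinZ a x : f (a *: x) = a *: f x.
Proof. by have := hf a x 0; rewrite !addr0 slin0 addr0. Qed.
Lemma slinN x : f (- x) = - f x.
Proof. by rewrite -scaleN1r slinZ scaleN1r. Qed.
Lemma slinB x y : f (x - y) = f x - f y.
Proof. by rewrite slinD slinN. Qed.
Lemma slin_sum n (g : 'I_n -> U) : f (\sum_i g i) = \sum_i f (g i).
Proof. exact: (big_morph f slinD slin0). Qed.
End Lin.

Lemma slin_comp (S : comUnitRingType) (U V X : lmodType S) (f : U -> V) (g : V -> X) :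
  slin f -> slin g -> slin (g \o f).
Proof. by move=> hf hg a x y /=; rewrite hf hg. Qed.

Lemma slin_id (S : comUnitRingType) (U : lmodType S) : slin (@id U).
Proof. by []. Qed.

Section Submod.
Variable S : comUnitRingType.
Variable V : lmodType S.
Variable U : V -> Prop.
Hypothesis hU : submod U.
Lemma sm0 : U 0. Proof. exact: hU.1. Qed.
Lemma smD x y : U x -> U y -> U (x + y).
Proof. by move=> hx hy; have := hU.2 1 _ _ hx hy; rewrite scale1r. Qed.
Lemma smZ a x : U x -> U (a *: x).
Proof. by move=> hx; have := hU.2 a _ _ hx sm0; rewrite addr0. Qed.
Lemma smN x : U x -> U (- x).
Proof. by move=> hx; rewrite -scaleN1r; apply: smZ. Qed.
Lemma smB x y : U x -> U y -> U (x - y).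
Proof. by move=> hx hy; apply: smD => //; apply: smN. Qed.
Lemma sm_sum n (g : 'I_n -> V) : (forall i, U (g i)) -> U (\sum_i g i).
Proof. move=> h; elim/big_ind: _ => //; [exact: sm0| exact: smD]. Qed.
Lemma sm_eq x y : U x -> U (y - x) -> U y.
Proof. by move=> hx hy; have := smD hx hy; rewrite addrC subrK. Qed.
End Submod.

Section IdealMul.
Variable S : comUnitRingType.
Variable V : lmodType S.
Variable I : S -> Prop.
Hypothesis hI : is_ideal I.
Variable T : V -> Prop.

Lemma im0 : ideal_mul I T 0.
Proof. by exists 0%N, (fun _ => 0), (fun _ => 0); split=> [[]//|]; rewrite big_ord0. Qed.

Lemma imZt a t : I a -> T t -> ideal_mul I T (a *: t).
Proof.
move=> ha ht; exists 1%N, (fun _ => a), (fun _ => t); split=> //.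
by rewrite big_ord1.
Qed.

Lemma imD x y : ideal_mul I T x -> ideal_mul I T y -> ideal_mul I T (x + y).
Proof.
move=> [n [a [t [h ->]]]] [m [b [s [h' ->]]]].
exists (n + m)%N, (fun k => match split k with inl i => a i | inr j => b j end),
  (fun k => match split k with inl i => t i | inr j => s j end).
split.
  by move=> k; case: (split k) => i; [apply: h| apply: h'].
rewrite big_split_ord /=; congr (_ + _); apply: eq_bigr => i _.
  by rewrite (unsplitK (inl i)).
by rewrite (unsplitK (inr i)).
Qed.

Lemma imZ c x : ideal_mul I T x -> ideal_mul I T (c *: x).
Proof.
move=> [n [a [t [h ->]]]]; exists n, (fun i => c * a i), t; split.
  by move=> i; split; [apply: idM; case: (h i)| case: (h i)].
by rewrite scaler_sumr; apply: eq_bigr => i _; rewrite scalerA.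
Qed.

Lemma im_submod : submod (ideal_mul I T).
Proof. split; first exact: im0. by move=> a x y hx hy; apply: imD => //; apply: imZ. Qed.

Lemma im_sub (U : V -> Prop) : submod U ->
  (forall a t, I a -> T t -> U (a *: t)) -> forall x, ideal_mul I T x -> U x.
Proof.
move=> hU h x [n [a [t [ht ->]]]]; apply: sm_sum => // i.
by case: (ht i) => ??; apply: h.
Qed.
End IdealMul.

Lemma im_mono (S : comUnitRingType) (V : lmodType S) (I I' : S -> Prop) (T T' : V -> Prop) :
  (forall a, I a -> I' a) -> (forall t, T t -> T' t) ->
  forall x, ideal_mul I T x -> ideal_mul I' T' x.
Proof.
move=> hI hT x [n [a [t [h ->]]]]; exists n, a, t; split=> // i.
by case: (h i) => ??; split; [apply: hI| apply: hT].
Qed.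

Lemma im_lin (S : comUnitRingType) (U V : lmodType S) (I : S -> Prop) (T : U -> Prop)
   (T' : V -> Prop) (f : U -> V) : slin f -> (forall t, T t -> T' (f t)) ->
  forall x, ideal_mul I T x -> ideal_mul I T' (f x).
Proof.
move=> hf hT x [n [a [t [h ->]]]]; exists n, a, (fun i => f (t i)); split.
  by move=> i; case: (h i) => ??; split=> //; apply: hT.
by rewrite (slin_sum hf); apply: eq_bigr => i _; rewrite (slinZ hf).
Qed.
Section Win.
Variables (S : comUnitRingType) (p : nat) (Fr : frame S p) (X : window Fr).
Let hI := fI_ideal Fr.

Lemma wF0 : wF X 0 = 0.
Proof.
have h := @wF_lin _ _ _ X 1 0 0; rewrite scale1r !addr0 rmorph1 scale1r in h.
by apply: (@addIr _ (wF X 0)); rewrite add0r -h.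
Qed.
Lemma wFD x y : wF X (x + y) = wF X x + wF X y.
Proof. by have := @wF_lin _ _ _ X 1 x y; rewrite !scale1r rmorph1 scale1r. Qed.
Lemma wFZ a x : wF X (a *: x) = fsigma Fr a *: wF X x.
Proof. by have := @wF_lin _ _ _ X a x 0; rewrite !addr0 wF0 addr0. Qed.
Lemma wF_sum n (g : 'I_n -> wP X) : wF X (\sum_i g i) = \sum_i wF X (g i).
Proof. exact: (big_morph _ wFD wF0). Qed.

Lemma wQ_submod : submod (wQ X).
Proof.
have [L [T [hL [hT [_ [_ hQ]]]]]] := wdecomp X.
split.
  by apply/hQ; exists 0, 0; rewrite addr0; split; [exact: sm0| split=> //; exact: im0].
move=> a x y /hQ [l [t [hl [ht ->]]]] /hQ [l' [t' [hl' [ht' ->]]]].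
apply/hQ; exists (a *: l + l'), (a *: t + t'); split; first by apply: hL.2.
split; first by apply: (im_submod hI T).2.
by rewrite scalerDr addrACA.
Qed.

Lemma IP_Q x : ideal_mul (fI Fr) (fun _ => True) x -> wQ X x.
Proof.
have [L [T [hL [hT [hdec [_ hQ]]]]]] := wdecomp X.
apply: im_sub; first exact: wQ_submod.
move=> a y ha _; have [l [t [hl [ht ->]]]] := hdec y.
apply/hQ; exists (a *: l), (a *: t); split; first exact: smZ.
by split; [exact: imZt| rewrite scalerDr].
Qed.

Lemma wF1_0 : wF1 X 0 = 0.
Proof.
have h0 := sm0 wQ_submod.
have h := wF1_lin 1 h0 h0; rewrite scale1r !addr0 rmorph1 scale1r in h.
by apply: (@addIr _ (wF1 X 0)); rewrite add0r -h.
Qed.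
Lemma wF1D x y : wQ X x -> wQ X y -> wF1 X (x + y) = wF1 X x + wF1 X y.
Proof. by move=> hx hy; have := wF1_lin 1 hx hy; rewrite !scale1r rmorph1 scale1r. Qed.
Lemma wF1Z a x : wQ X x -> wF1 X (a *: x) = fsigma Fr a *: wF1 X x.
Proof.
move=> hx; have h0 := sm0 wQ_submod.
by have := wF1_lin a hx h0; rewrite !addr0 wF1_0 addr0.
Qed.
Lemma wF1_sum n (g : 'I_n -> wP X) : (forall i, wQ X (g i)) ->
  wF1 X (\sum_i g i) = \sum_i wF1 X (g i).
Proof.
move=> h; suff : wQ X (\sum_i g i) /\ wF1 X (\sum_i g i) = \sum_i wF1 X (g i) by case.
elim/big_rec2: _ => [|i y1 y2 _ [hy <-]]; first by split; [exact: (sm0 (wQ_submod))| exact: wF1_0].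
split; first by apply: smD (h i) hy; exact: wQ_submod.
by rewrite wF1D //; exact: h.
Qed.
End Win.
Lemma F1_IP (S : comUnitRingType) (p : nat) (Fr : frame S p) (X : window Fr)
  n (a : 'I_n -> S) (q : 'I_n -> wP X) : (forall i, fI Fr (a i)) ->
  wF1 X (\sum_i a i *: q i) = \sum_i fsigma1 Fr (a i) *: wF X (q i).
Proof.
move=> ha; rewrite wF1_sum; last first.
  by move=> i; apply: IP_Q; apply: imZt => //; exact: fI_ideal.
by apply: eq_bigr => i _; rewrite wF1_F.
Qed.

Lemma frame_s1_0 (S : comUnitRingType) (p : nat) (Fr : frame S p) : fsigma1 Fr 0 = 0.
Proof.
have h0 := id0 (fI_ideal Fr).
have h := @fsigma1_lin _ _ Fr 1 0 0 h0 h0; rewrite mul1r addr0 rmorph1 mul1r in h.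
by apply: (@addIr _ (fsigma1 Fr 0)); rewrite add0r -h.
Qed.

Lemma frame_theta (S : comUnitRingType) (p : nat) (F : frame S p) : exists th : S,
  (forall (X : window F) q, wQ X q -> wF X q = th *: wF1 X q) /\
  (forall F' : frame S p, strict_id_hom F F' -> forall a, fI F' a ->
      fsigma F a = th * fsigma1 F' a).
Proof.
have [n [c [x [hx hs]]]] := fgen F.
exists (\sum_i c i * fsigma F (x i)); split.
  move=> X q hq; rewrite -{1}(scale1r (wF X q)) -hs !scaler_suml.
  apply: eq_bigr => i _; rewrite -!scalerA -wF1_F // wF1Z //.
move=> F' [hinc [hsig hsig1]] a ha.
rewrite -[fsigma F a]mulr1 -hs mulr_sumr mulr_suml; apply: eq_bigr => i _.
have h0 := id0 (fI_ideal F').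
have e1 := @fsigma1_lin _ _ F' (x i) a 0 ha h0.
have e2 := @fsigma1_lin _ _ F' a (x i) 0 (hinc _ (hx i)) h0.
rewrite !addr0 frame_s1_0 !addr0 in e1 e2.
have e3 : fsigma F' a * fsigma1 F' (x i) = fsigma F' (x i) * fsigma1 F' a.
  by rewrite -e2 mulrC e1.
by rewrite -(hsig1 _ (hx i)) -!hsig mulrCA e3 mulrA.
Qed.

Definition F1span (S : comUnitRingType) (p : nat) (Fr : frame S p) (X : window Fr)
  (U : wP X -> Prop) (x : wP X) :=
  exists n (c : 'I_n -> S) (q : 'I_n -> wP X), (forall i, U (q i)) /\
     x = \sum_i c i *: wF1 X (q i).

Section Span.
Variables (S : comUnitRingType) (p : nat) (Fr : frame S p) (X : window Fr).
Variable U : wP X -> Prop.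
Lemma span0 : F1span U 0.
Proof. by exists 0%N, (fun _ => 0), (fun _ => 0); split=> [[]//|]; rewrite big_ord0. Qed.
Lemma spanD x y : F1span U x -> F1span U y -> F1span U (x + y).
Proof.
move=> [n [a [t [h ->]]]] [m [b [s [h' ->]]]].
exists (n + m)%N, (fun k => match split k with inl i => a i | inr j => b j end),
  (fun k => match split k with inl i => t i | inr j => s j end).
split.
  by move=> k; case: (split k) => i; [apply: h| apply: h'].
rewrite big_split_ord /=; congr (_ + _); apply: eq_bigr => i _.
  by rewrite (unsplitK (inl i)).
by rewrite (unsplitK (inr i)).
Qed.
Lemma spanZ c x : F1span U x -> F1span U (c *: x).
Proof.
move=> [n [a [t [h ->]]]]; exists n, (fun i => c * a i), t; split=> //.
by rewrite scaler_sumr; apply: eq_bigr => i _; rewrite scalerA.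
Qed.
Lemma span_sum n (g : 'I_n -> wP X) : (forall i, F1span U (g i)) -> F1span U (\sum_i g i).
Proof. move=> h; elim/big_ind: _ => //; [exact: span0| exact: spanD]. Qed.
Lemma span_gen q : U q -> F1span U (wF1 X q).
Proof.
move=> hq; exists 1%N, (fun _ => 1), (fun _ => q); split=> //.
by rewrite big_ord1 scale1r.
Qed.
End Span.
Lemma wmap_comp (S : comUnitRingType) (p : nat) (F1 F2 F3 : frame S p)
  (X1 : window F1) (X2 : window F2) (X3 : window F3)
  (f : wP X1 -> wP X2) (g : wP X2 -> wP X3) : wmap f -> wmap g -> wmap (g \o f).
Proof.
move=> [lf [qf [ff f1f]]] [lg [qg [fg f1g]]]; split; first exact: slin_comp.
split; first by move=> x hx; apply: qg; apply: qf.
split; first by move=> x /=; rewrite ff fg.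
by move=> x hx /=; rewrite f1f // f1g //; apply: qf.
Qed.

Lemma IP_map (S : comUnitRingType) (U V : lmodType S) (I : S -> Prop) (f : U -> V) :
  slin f -> forall x, ideal_mul I (fun _ => True) x -> ideal_mul I (fun _ => True) (f x).
Proof. by move=> hf; apply: im_lin. Qed.

Lemma IP_decomp (S : comUnitRingType) (p : nat) (Fr Fr' : frame S p) (X : window Fr')
  (z : wP X) : ideal_mul (fI Fr) (fun _ => True) z ->
  exists n (a : 'I_n -> S) (q : 'I_n -> wP X), (forall i, fI Fr (a i)) /\ z = \sum_i a i *: q i.
Proof. by move=> [n [a [q [h ->]]]]; exists n, a, q; split=> // i; case: (h i). Qed.

Section Univ.
Variables (S : comUnitRingType) (p : nat) (F F' : frame S p).

Lemma univ (P : window F) (P' : window F') (u : wP P -> wP P') (w : wP P' -> wP P) :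
  wmap u -> slin w -> (forall x, w (u x) = x) -> (forall y, u (w y) = y) ->
  (forall y, wQ P' y -> exists q z, wQ P q /\ ideal_mul (fI F') (fun _ => True) z /\ w y = q + z) ->
  is_base_change P P' u.
Proof.
move=> hu hw wu uw hQ; split=> // P'' v hv.
have [lu [qu [fu f1u]]] := hu; have [lv [qv [fv f1v]]] := hv.
split; last first.
  by move=> w1 w2 _ _ h1 h2 y; rewrite -(uw y) h1 h2.
exists (v \o w); split; last by move=> x /=; rewrite wu.
split; first exact: slin_comp.
split.
  move=> y /hQ [q [z [hq [hz e]]]] /=; rewrite e (slinD lv).
  apply: smD; first exact: wQ_submod.
    exact: qv.
  by apply: IP_Q; apply: IP_map.
split.
  by move=> y /=; rewrite -{1}(uw y) -fu wu fv.
move=> y hy /=; have [q [z [hq [hz e]]]] := hQ _ hy.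
have [n [a [t [ha ez]]]] := IP_decomp hz.
have ey : y = u q + \sum_i a i *: u (t i).
  by rewrite -(uw y) e (slinD lu) ez (slin_sum lu); congr (_ + _); apply: eq_bigr => i _; rewrite (slinZ lu).
have hs : wQ P' (\sum_i a i *: u (t i)).
  apply: IP_Q; exists n, a, (fun i => u (t i)); split=> // i; split=> //.
rewrite ey (wF1D (qu _ hq) hs) -f1u // F1_IP //.
rewrite -ey e ez (slinD hw) wu (slin_sum hw) (slinD lv) (slin_sum lv) f1v //.
rewrite (slinD lv) (slin_sum lv).
have hs2 : wQ P'' (\sum_i v (a i *: t i)).
  apply: IP_Q; exists n, a, (fun i => v (t i)); split=> //.
  by apply: eq_bigr => i _; rewrite (slinZ lv).
rewrite wF1D //; last exact: qv.
congr (_ + _).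
under [\sum_i v (_ *: _)]eq_bigr => i _ do rewrite (slinZ lv).
rewrite F1_IP //; apply: eq_bigr => i _.
by rewrite -fu (slinZ hw) wu (slinZ lv) fv.
Qed.
End Univ.
Section Decomp.
Variables (S : comUnitRingType) (V : lmodType S) (L T : V -> Prop).
Hypotheses (hL : submod L) (hT : submod T)
  (hdec : forall x, exists l t, L l /\ T t /\ x = l + t)
  (huniq : forall l t, L l -> T t -> l + t = 0 -> l = 0 /\ t = 0).

Definition piL (x : V) : V := proj1_sig (constructive_indefinite_description _ (hdec x)).
Definition piT (x : V) : V := x - piL x.

Lemma piL_spec x : L (piL x) /\ T (piT x).
Proof.
rewrite /piT /piL; case: (constructive_indefinite_description _ _) => l [t [hl [ht e]]] /=.
by split=> //; rewrite e addrC addKr.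
Qed.
Lemma piLT x : x = piL x + piT x. Proof. by rewrite /piT addrC subrK. Qed.

Lemma dec_uniq l1 t1 l2 t2 : L l1 -> T t1 -> L l2 -> T t2 -> l1 + t1 = l2 + t2 ->
  l1 = l2 /\ t1 = t2.
Proof.
move=> h1 h2 h3 h4 e.
have [] := huniq (smB hL h1 h3) (smB hT h2 h4).
  by rewrite addrACA e -opprD subrr.
by move=> /eqP; rewrite subr_eq0 => /eqP -> /eqP; rewrite subr_eq0 => /eqP ->.
Qed.

Lemma piL_eq x l t : L l -> T t -> x = l + t -> piL x = l /\ piT x = t.
Proof.
move=> hl ht e; have [h1 h2] := piL_spec x.
by apply: dec_uniq => //; rewrite -piLT.
Qed.

Lemma piL_lin : slin piL.
Proof.
move=> a x y; have [h1 h2] := piL_spec x; have [h3 h4] := piL_spec y.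
have [] := @piL_eq (a *: x + y) (a *: piL x + piL y) (a *: piT x + piT y).
- exact: hL.2.
- exact: hT.2.
- by rewrite {1}(piLT x) {1}(piLT y) scalerDr addrACA.
by [].
Qed.
Lemma piT_lin : slin piT.
Proof. move=> a x y; rewrite /piT piL_lin scalerBr addrACA opprD. by []. Qed.
End Decomp.
Lemma frame_s1_sum (S : comUnitRingType) (p : nat) (Fr : frame S p) n (b x : 'I_n -> S) :
  (forall k, fI Fr (x k)) ->
  fsigma1 Fr (\sum_k b k * x k) = \sum_k fsigma Fr (b k) * fsigma1 Fr (x k).
Proof.
move=> hx; have hI := fI_ideal Fr.
suff : fI Fr (\sum_k b k * x k) /\ fsigma1 Fr (\sum_k b k * x k) = \sum_k fsigma Fr (b k) * fsigma1 Fr (x k) by case.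
elim/big_rec2: _ => [|k y1 y2 _ [hy <-]]; first by split; [exact: id0| exact: frame_s1_0].
split; first by apply: idD => //; apply: idM.
by rewrite fsigma1_lin.
Qed.

Section Gdef.
Variables (S : comUnitRingType) (p : nat) (F F' : frame S p).
Hypothesis halpha : strict_id_hom F F'.
Variables (X : window F) (n : nat) (i : wP X -> 'rV[S]_n) (r : 'rV[S]_n -> wP X).
Hypotheses (hi : slin i) (hr : slin r) (hri : forall x, r (i x) = x).

Definition Gmap (y : wP X) : wP X :=
  \sum_(j < n) fsigma1 F' (i y 0 j) *: wF X (r (delta_mx 0 j)).

Lemma r_expand v : r v = \sum_j v 0 j *: r (delta_mx 0 j).
Proof.
rewrite {1}(row_sum_delta v) (slin_sum hr); apply: eq_bigr => j _; exact: slinZ.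
Qed.

Lemma i_entry m (a : 'I_m -> S) (q : 'I_m -> wP X) j :
  i (\sum_k a k *: q k) 0 j = \sum_k a k * i (q k) 0 j.
Proof.
rewrite (slin_sum hi) summxE; apply: eq_bigr => k _; by rewrite (slinZ hi) mxE.
Qed.

Lemma i_IP y : ideal_mul (fI F') (fun _ => True) y -> forall j, fI F' (i y 0 j).
Proof.
move=> /IP_decomp [m [a [q [ha ->]]]] j; rewrite i_entry.
by apply: (id_sum (fI_ideal F')) => k; apply: (idMr (fI_ideal F')).
Qed.

Lemma G_sum m (a : 'I_m -> S) (q : 'I_m -> wP X) : (forall k, fI F' (a k)) ->
  Gmap (\sum_k a k *: q k) = \sum_k fsigma1 F' (a k) *: wF X (q k).
Proof.
move=> ha; have [_ [hsig _]] := halpha.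
rewrite /Gmap.
rewrite (eq_bigr (fun j => \sum_k fsigma1 F' (a k) *: (fsigma F (i (q k) 0 j) *: wF X (r (delta_mx 0 j))))); last first.
  move=> j _; rewrite i_entry (eq_bigr (fun k => i (q k) 0 j * a k)); last by move=> k _; rewrite mulrC.
  rewrite frame_s1_sum // scaler_suml; apply: eq_bigr => k _.
  by rewrite scalerA hsig mulrC.
rewrite exchange_big /=; apply: eq_bigr => k _.
rewrite -{2}(hri (q k)) r_expand wF_sum scaler_sumr; apply: eq_bigr => j _.
by rewrite wFZ.
Qed.

Lemma G_lin a y z : ideal_mul (fI F') (fun _ => True) y -> ideal_mul (fI F') (fun _ => True) z ->
  Gmap (a *: y + z) = fsigma F a *: Gmap y + Gmap z.
Proof.
move=> hy hz; have [_ [hsig _]] := halpha.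
rewrite /Gmap scaler_sumr -big_split /=; apply: eq_bigr => j _.
rewrite hi mxE [(a *: i y) 0 j]mxE fsigma1_lin; try exact: i_IP.
by rewrite scalerDl scalerA hsig.
Qed.

Variables (L T : wP X -> Prop).
Hypotheses (hL : submod L) (hT : submod T)
  (hdec : forall x, exists l t, L l /\ T t /\ x = l + t)
  (huniq : forall l t, L l -> T t -> l + t = 0 -> l = 0 /\ t = 0)
  (hQ : forall x, wQ X x <-> exists l t, L l /\ ideal_mul (fI F) T t /\ x = l + t).

Definition bQ (x : wP X) : Prop :=
  exists q z, wQ X q /\ ideal_mul (fI F') (fun _ => True) z /\ x = q + z.
Definition bF1 (x : wP X) : wP X := wF1 X (piL hdec x) + Gmap (piT hdec x).

Lemma IT_T I0 (hI0 : is_ideal I0) t : ideal_mul I0 T t -> T t.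
Proof. by apply: im_sub => // a s _ hs; apply: smZ. Qed.

Lemma L_Q l : L l -> wQ X l.
Proof. by move=> hl; apply/hQ; exists l, 0; split=> //; rewrite addr0; split=> //; exact: im0. Qed.

Lemma bQ_dec x : bQ x <-> exists l t, L l /\ ideal_mul (fI F') T t /\ x = l + t.
Proof.
have [hinc _] := halpha.
split.
  move=> [q [z [/hQ [l [t [hl [ht ->]]]] [/IP_decomp [m [a [s [ha ->]]]] ->]]]].
  exists (l + \sum_k a k *: piL hdec (s k)), (t + \sum_k a k *: piT hdec (s k)).
  split; first by apply: smD => //; apply: sm_sum => // k; apply: smZ => //; by case: (piL_spec hdec (s k)).
  split.
    apply: imD; first by apply: im_mono ht.
    exists m, a, (fun k => piT hdec (s k)); split=> // k; split=> //; by case: (piL_spec hdec (s k)).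
  rewrite addrACA -big_split /=; congr (_ + _ + _); apply: eq_bigr => k _.
  by rewrite -scalerDr -piLT.
move=> [l [t [hl [ht ->]]]]; exists l, t; split; first exact: L_Q.
split=> //; by apply: im_mono ht.
Qed.

Lemma bQ_piT x : bQ x -> ideal_mul (fI F') T (piT hdec x).
Proof.
move=> /bQ_dec [l [t [hl [ht e]]]].
by have [_ ->] := piL_eq hL hT hdec huniq hl (IT_T (fI_ideal F') ht) e.
Qed.

Lemma bQ_piT' x : bQ x -> ideal_mul (fI F') (fun _ => True) (piT hdec x).
Proof. by move=> /bQ_piT; apply: im_mono. Qed.

Lemma bF1_Q q : wQ X q -> bF1 q = wF1 X q.
Proof.
have [_ [_ hsig1]] := halpha.
move=> hq; have := hq; move=> /hQ [l [t [hl [ht e]]]].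
have [e1 e2] := piL_eq hL hT hdec huniq hl (IT_T (fI_ideal F) ht) e.
rewrite /bF1 e1 e2 e wF1D; first last.
- by apply: IP_Q; apply: im_mono ht.
- exact: L_Q.
congr (_ + _); have [m [a [s [ha es]]]] : exists m (a : 'I_m -> S) (s : 'I_m -> wP X),
    (forall k, fI F (a k)) /\ t = \sum_k a k *: s k.
  by case: ht => m [a [s [h ->]]]; exists m, a, s; split=> // k; case: (h k).
rewrite es F1_IP // G_sum; last by move=> k; apply: halpha.1.
by apply: eq_bigr => k _; rewrite hsig1.
Qed.

Lemma G_single a y : fI F' a -> Gmap (a *: y) = fsigma1 F' a *: wF X y.
Proof.
move=> ha; have := @G_sum 1 (fun _ => a) (fun _ => y); rewrite !big_ord1; apply=> //.
Qed.

Lemma bF1_lin a x y : bQ x -> bQ y -> bF1 (a *: x + y) = fsigma F' a *: bF1 x + bF1 y.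
Proof.
have [_ [hsig _]] := halpha.
move=> hx hy; rewrite /bF1 (piL_lin hL hT hdec huniq) (piT_lin hL hT hdec huniq).
have [hlx _] := piL_spec hdec x; have [hly _] := piL_spec hdec y.
rewrite wF1_lin; try exact: L_Q.
rewrite G_lin; try exact: bQ_piT'.
by rewrite hsig scalerDr addrACA.
Qed.

Lemma bF1_F a x : fI F' a -> bF1 (a *: x) = fsigma1 F' a *: wF X x.
Proof.
move=> ha; rewrite /bF1 (slinZ (piL_lin hL hT hdec huniq)) (slinZ (piT_lin hL hT hdec huniq)).
have [hlx _] := piL_spec hdec x.
have [th [hth1 hth2]] := frame_theta F.
rewrite wF1Z; last exact: L_Q.
rewrite G_single // (hth2 F' halpha a ha) mulrC -scalerA -hth1; last exact: L_Q.
by rewrite -scalerDr -wFD -piLT.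
Qed.

Lemma bF_lin a x y : wF X (a *: x + y) = fsigma F' a *: wF X x + wF X y.
Proof. by have [_ [hsig _]] := halpha; rewrite hsig; exact: wF_lin. Qed.

Lemma bdecomp : exists L T : wP X -> Prop,
      submod L /\ submod T /\
      (forall x, exists l t, L l /\ T t /\ x = l + t) /\
      (forall l t, L l -> T t -> l + t = 0 -> l = 0 /\ t = 0) /\
      (forall x, bQ x <-> exists l t, L l /\ ideal_mul (fI F') T t /\ x = l + t).
Proof. exists L, T; do 4!split=> //; exact: bQ_dec. Qed.

Lemma bF1_gen x : exists (m : nat) (c : 'I_m -> S) (q : 'I_m -> wP X),
      (forall k, bQ (q k)) /\ x = \sum_(k < m) c k *: bF1 (q k).
Proof.
have [m [c [q [hq e]]]] := wF1_gen x.
exists m, c, q; split.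
  by move=> k; exists (q k), 0; split=> //; rewrite addr0; split=> //; exact: im0.
by rewrite e; apply: eq_bigr => k _; rewrite bF1_Q.
Qed.

Definition bcW : window F' :=
  @Window S p F' (wP X) bQ (wF X) bF1 (wP_fgproj X) bF_lin bF1_lin bdecomp bF1_F bF1_gen.

Lemma bcW_bc : is_base_change X bcW id.
Proof.
apply: (@univ _ _ F F' X bcW id id) => //.
  split; first exact: slin_id.
  split; first by move=> x hx; exists x, 0; split=> //; rewrite addr0; split=> //; exact: im0.
  split=> // x hx /=; by rewrite bF1_Q.
Qed.
End Gdef.

Lemma wmap_id (S : comUnitRingType) (p : nat) (Fr : frame S p) (X : window Fr) :
  wmap (@id (wP X)).
Proof. by split; [exact: slin_id| do 2!split=> //]. Qed.

Definition bc_good (S : comUnitRingType) (p : nat) (F F' : frame S p)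
   (P : window F) (P' : window F') (u : wP P -> wP P') : Prop :=
  wmap u /\ exists w : wP P' -> wP P, slin w /\ (forall x, w (u x) = x) /\
    (forall y, u (w y) = y) /\
    (forall y, wQ P' y <-> exists q z, wQ P q /\ ideal_mul (fI F') (fun _ => True) z /\ w y = q + z).
Arguments bc_good {S p F F'} P P' u.

Lemma bc_good_of (S : comUnitRingType) (p : nat) (F F' : frame S p)
   (halpha : strict_id_hom F F') (P : window F) (P' : window F') (u : wP P -> wP P') :
  is_base_change P P' u -> bc_good P P' u.
Proof.
move=> [hu hU].
have [n [i [r [hi [hr hri]]]]] := wP_fgproj P.
have [L [T [hL [hT [hdec [huniq hQ]]]]]] := @wdecomp _ _ _ P.
pose B := bcW halpha hi hr hri hL hT hdec huniq hQ.
have hB : is_base_change P B id := bcW_bc halpha hi hr hri hL hT hdec huniq hQ.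
have [[w' [hw' ew']] _] := hB.2 P' u hu.
have [[w [hw ew]] _] := hU B id hB.1.
have huniqP' := (hU P' u hu).2.
have uw : forall y, u (w y) = y.
  move=> y; have hc : wmap (w' \o w) by exact: wmap_comp.
  have hc2 : forall x, (w' \o w) (u x) = u x by move=> x /=; rewrite ew ew'.
  have := huniqP' (w' \o w) id hc (wmap_id P') hc2 (fun x => erefl) y.
  by rewrite /= ew'.
split=> //; exists w; split; first by case: hw.
split=> //; split=> //.
move=> y; split.
  by move=> /(proj1 (proj2 hw)).
move=> [q [z [hq [hz e]]]]; rewrite -(uw y) e; have [lu [qu _]] := hu.
rewrite (slinD lu); apply: smD; first exact: wQ_submod.
  exact: qu.
by apply: IP_Q; apply: IP_map.
Qed.

Lemma det_cong (S : comUnitRingType) (J : S -> Prop) (hJ : is_ideal J) n (A B : 'M[S]_n) :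
  (forall j k, J (A j k - B j k)) -> J (\det A - \det B).
Proof.
move=> h; rewrite /determinant.
pose K (a b : S) := J (a - b).
suff : K (\sum_(s : 'S_n) (-1) ^+ s * \prod_j A j (s j)) (\sum_(s : 'S_n) (-1) ^+ s * \prod_j B j (s j)) by [].
apply: big_ind2; first by rewrite /K subrr; exact: (id0 hJ).
  by move=> x1 x2 y1 y2; rewrite /K => h1 h2; rewrite opprD addrACA; apply: (idD hJ).
move=> s _; rewrite /K -mulrBr; apply: (idM hJ).
suff : K (\prod_j A j (s j)) (\prod_j B j (s j)) by [].
apply: big_ind2; first by rewrite /K subrr; exact: (id0 hJ).
  move=> x1 x2 y1 y2; rewrite /K => h1 h2.
  have -> : x1 * y1 - x2 * y2 = x1 * (y1 - y2) + (x1 - x2) * y2.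
    by rewrite mulrBr mulrBl addrA subrK.
  by apply: (idD hJ); [apply: (idM hJ)| apply: (idMr hJ)].
by move=> j _; apply: h.
Qed.

Section Bij.
Variables (S : comUnitRingType) (V : lmodType S) (J : S -> Prop).
Hypotheses (hJ : is_ideal J) (hJrad : forall a, J a -> in_jacobson a).
Variables (n : nat) (i : V -> 'rV[S]_n) (r : 'rV[S]_n -> V).
Hypotheses (hi : slin i) (hr : slin r) (hri : forall x, r (i x) = x).
Variable chi : V -> V.
Hypotheses (hchi : slin chi) (hnear : forall x, ideal_mul J (fun _ => True) (x - chi x)).

Definition mxof (h : V -> V) : 'M[S]_n := \matrix_j (i (h (r (delta_mx 0 j)))).

Lemma mxofP h : slin h -> forall v, v *m mxof h = i (h (r v)).
Proof.
move=> hh v; rewrite {1}(row_sum_delta v) mulmx_suml.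
rewrite {2}(row_sum_delta v) (slin_sum hr) (slin_sum hh) (slin_sum hi).
apply: eq_bigr => j _; rewrite -scalemxAl -rowE rowK.
by rewrite (slinZ hr) (slinZ hh) (slinZ hi).
Qed.

Lemma mx_ext (A B : 'M[S]_n) : (forall v : 'rV[S]_n, v *m A = v *m B) -> A = B.
Proof. by move=> h; apply/row_matrixP => j; rewrite !rowE h. Qed.

Let eta x := x - chi x.
Lemma eta_lin : slin eta.
Proof. by move=> a x y; rewrite /eta hchi scalerBr addrACA opprD. Qed.

Let M := mxof eta.
Let E := mxof id.
Let A := 1%:M - M.

Lemma i_J y : ideal_mul J (fun _ => True) y -> forall k, J (i y 0 k).
Proof.
move=> [m [a [q [h ->]]]] k; rewrite (slin_sum hi) summxE.
apply: (id_sum hJ) => l; rewrite (slinZ hi) mxE; apply: (idMr hJ); by case: (h l).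
Qed.

Lemma A_unit : A \in unitmx.
Proof.
rewrite unitmxE.
have hd : J (\det A - \det (1%:M : 'M[S]_n)).
  apply: det_cong => // j k; rewrite /A /M /mxof !mxE.
  case: (j == k) => /=.
  - by rewrite addrAC subrr add0r; apply: (idN hJ); apply: i_J; exact: hnear.
  - by rewrite subr0 sub0r; apply: (idN hJ); apply: i_J; exact: hnear.
rewrite det1 in hd.
have := hJrad (idN hJ hd) 1; by rewrite mulr1 opprK addrC subrK.
Qed.

Lemma iA x : i (chi x) = i x *m A.
Proof.
have he := eta_lin.
rewrite /A mulmxBr mulmx1 /M (mxofP he) hri.
have -> : chi x = x - eta x by rewrite /eta opprB addrC subrK.
by rewrite (slinB hi).
Qed.

Lemma Eid v : v *m E = i (r v).
Proof. by rewrite /E (mxofP (@slin_id _ V)). Qed.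

Lemma EM : E *m M = M.
Proof.
have he := eta_lin.
by apply: mx_ext => v; rewrite mulmxA Eid /M !(mxofP he) hri.
Qed.

Lemma ME : M *m E = M.
Proof.
have he := eta_lin.
by apply: mx_ext => v; rewrite mulmxA Eid /M !(mxofP he) hri.
Qed.

Lemma EA : E *m A = A *m E.
Proof. by rewrite /A mulmxBr mulmxBl mulmx1 mul1mx EM ME. Qed.

Lemma NE : invmx A *m E = E *m invmx A.
Proof.
have hu := A_unit.
rewrite -[invmx A *m E]mulmx1 -(mulmxV hu) mulmxA -(mulmxA _ E) EA.
by rewrite mulmxA (mulVmx hu) mul1mx.
Qed.

Lemma chi_inj x y : chi x = chi y -> x = y.
Proof.
move=> e; have : i x *m A = i y *m A by rewrite -!iA e.
move=> /(congr1 (mulmx^~ (invmx A))); rewrite -!mulmxA (mulmxV A_unit) !mulmx1.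
by move=> e2; rewrite -(hri x) -(hri y) e2.
Qed.

Lemma chi_surj y : chi (r (i y *m invmx A)) = y.
Proof.
rewrite -(hri (chi _)) iA -Eid -mulmxA EA mulmxA -(mulmxA (i y)) (mulVmx A_unit).
by rewrite mulmx1 Eid !hri.
Qed.
End Bij.

Lemma fchoice (A B : Type) (P : A -> B -> Prop) :
  (forall a, exists b, P a b) -> exists f : A -> B, forall a, P a (f a).
Proof.
move=> h; exists (fun a => proj1_sig (constructive_indefinite_description _ (h a))).
by move=> a; case: (constructive_indefinite_description _ _).
Qed.

Section Comb.
Variables (S : comUnitRingType) (V : lmodType S) (n : nat).
Variables (i : V -> 'rV[S]_n) (r : 'rV[S]_n -> V).
Hypotheses (hi : slin i) (hr : slin r) (hri : forall x, r (i x) = x).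

Definition comb (g : 'I_n -> V) (x : V) : V := \sum_j i x 0 j *: g j.

Lemma comb_lin g : slin (comb g).
Proof.
move=> a x y; rewrite /comb scaler_sumr -big_split /=; apply: eq_bigr => j _.
by rewrite hi mxE [(a *: i x) 0 j]mxE scalerDl scalerA.
Qed.

Lemma comb_h (U : lmodType S) (h : V -> U) : slin h -> forall x,
  h x = \sum_j i x 0 j *: h (r (delta_mx 0 j)).
Proof.
move=> hh x; rewrite -{1}(hri x) {1}(row_sum_delta (i x)) (slin_sum hr) (slin_sum hh).
by apply: eq_bigr => j _; rewrite (slinZ hr) (slinZ hh).
Qed.

Lemma comb_in (U : V -> Prop) g x : submod U -> (forall j, U (g j)) -> U (comb g x).
Proof. by move=> hU hg; apply: sm_sum => // j; apply: smZ. Qed.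

Lemma combD g1 g2 x : comb (fun j => g1 j + g2 j) x = comb g1 x + comb g2 x.
Proof. by rewrite /comb -big_split; apply: eq_bigr => j _; rewrite scalerDr. Qed.
End Comb.

Lemma zm5 (V : zmodType) (a b c d e : V) :
  a + b - (e + c) = (a + d) - e + (b - c - d).
Proof.
by rewrite (addrAC a d (-e)) -(addrA (a - e)) (addrC d) subrK opprD addrACA.
Qed.

Section Lift.
Variables (S : comUnitRingType) (p : nat) (F F' : frame S p) (P' : window F').
Variables (W W' : wP P' -> Prop).
Let IP := ideal_mul (fI F) (fun _ : wP P' => True).
Let I'P := ideal_mul (fI F') (fun _ : wP P' => True).
Hypotheses (hW : submod W) (hIW : forall x, IP x -> W x)
  (hW' : submod W') (hIW' : forall x, IP x -> W' x)
  (hsum : forall x, exists w w', W w /\ W' w' /\ x = w + w')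
  (hcap : forall x, W x -> W' x -> IP x)
  (hQW : forall x, wQ P' x <-> exists w z, W w /\ I'P z /\ x = w + z).

Lemma lift_decomp : exists L T : wP P' -> Prop,
  submod L /\ submod T /\
  (forall x, exists l t, L l /\ T t /\ x = l + t) /\
  (forall l t, L l -> T t -> l + t = 0 -> l = 0 /\ t = 0) /\
  (forall x, W x <-> exists l t, L l /\ ideal_mul (fI F) T t /\ x = l + t).
Proof.
have hI' := fI_ideal F'; have hI := fI_ideal F.
have hIP' : submod I'P by exact: im_submod.
have hIP : submod IP by exact: im_submod.
have [n [i [r [hi [hr hri]]]]] := wP_fgproj P'.
have [L' [T' [hL' [hT' [hdec' [huniq' hQ']]]]]] := @wdecomp _ _ _ P'.
pose pL := piL hdec'; pose pT := piT hdec'.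
have hpL : slin pL := piL_lin hL' hT' hdec' huniq'.
have hpT : slin pT := piT_lin hL' hT' hdec' huniq'.
have pLs x : L' (pL x) := (piL_spec hdec' x).1.
have pTs x : T' (pT x) := (piL_spec hdec' x).2.
have hWQ x : W x -> wQ P' x.
  by move=> hx; apply/hQW; exists x, 0; rewrite addr0; split=> //; split=> //; exact: im0.
have hQT x : wQ P' x -> I'P (pT x).
  move=> /hQ' [l [t [hl [ht e]]]].
  rewrite /pT (piL_eq hL' hT' hdec' huniq' hl (IT_T hT' hI' ht) e).2.
  by apply: im_mono ht.
have hLQ l : L' l -> wQ P' l.
  by move=> hl; apply/hQ'; exists l, 0; rewrite addr0; split=> //; split=> //; exact: im0.
have Hc : forall j : 'I_n, exists w, W w /\ I'P (pL (r (delta_mx 0 j)) - w).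
  move=> j; have := hLQ _ (pLs (r (delta_mx 0 j))).
  move=> /hQW [w [z [hw [hz e]]]]; exists w; split=> //.
  by rewrite e addrC addKr.
have [c hc] := fchoice Hc.
pose psi := comb i c.
have hpsi : slin psi := comb_lin hi c.
have psiW x : W (psi x) by rewrite /psi; apply: comb_in => // j; case: (hc j).
have psiL l : L' l -> I'P (l - psi l).
  move=> hl.
  have el : pL l = l by exact: (piL_eq hL' hT' hdec' huniq' hl (sm0 hT') (esym (addr0 l))).1.
  rewrite -{1}el (comb_h hr hri hpL) /psi /comb -sumrB.
  apply: sm_sum => // j; rewrite -scalerBr; apply: smZ => //; by case: (hc j).
have Hab : forall j : 'I_n, exists ab : wP P' * wP P',
    W ab.1 /\ W' ab.2 /\ pT (r (delta_mx 0 j)) = ab.1 + ab.2.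
  move=> j; have [w [w' [h1 [h2 e]]]] := hsum (pT (r (delta_mx 0 j))).
  by exists (w, w').
have [ab hab] := fchoice Hab.
pose phi := comb i (fun j => (ab j).2).
pose om := comb i (fun j => (ab j).1).
have hphi : slin phi := comb_lin hi _.
have hom : slin om := comb_lin hi _.
have phiW' x : W' (phi x) by rewrite /phi; apply: comb_in => // j; case: (hab j) => _ [].
have omW x : W (om x) by rewrite /om; apply: comb_in => // j; case: (hab j).
have pTe x : pT x = om x + phi x.
  rewrite (comb_h hr hri hpT) /om /phi -combD; apply: eq_bigr => j _.
  by case: (hab j) => _ [_ ->].
pose lam t := pL (t - phi t).
have hlam : slin lam by move=> a x y; rewrite /lam hphi -hpL; congr (pL _); rewrite scalerBr addrACA opprD.
pose chi x := psi (pL x + lam (pT x)) + phi (pT x).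
have hchi : slin chi.
  move=> a x y; rewrite /chi hpT hlam hpL.
  by rewrite addrACA -scalerDr hpsi hphi scalerDr addrACA.
have pTT x : pT (pT x) = pT x.
  exact: (piL_eq hL' hT' hdec' huniq' (sm0 hL') (pTs x) (esym (add0r _))).2.
have near x : I'P (x - chi x).
  have e : x - chi x = (pL x + lam (pT x) - psi (pL x + lam (pT x))) + pT (pT x - phi (pT x)).
    rewrite {1}(piLT hdec' x) /chi /lam [pT (_ - _)]/pT /piT.
    exact: zm5.
  rewrite e; apply: (smD hIP'); first by apply: psiL; apply: (smD hL'); apply: pLs.
  apply: hQT; apply: hWQ.
  have -> : pT x - phi (pT x) = om (pT x) by rewrite -{1}pTT pTe addrK.
  exact: omW.
have hrad a : fI F' a -> in_jacobson a.
  by move=> ha; have := @frad _ _ F' a 0 ha; rewrite mulr0 addr0.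
have cinj := chi_inj hI' hrad hi hr hri hchi near.
have csurj := chi_surj hI' hrad hi hr hri hchi near.
pose L := fun y => exists l, L' l /\ y = psi l.
pose T := fun y => exists t, T' t /\ y = phi t.
have hL : submod L.
  split; first by exists 0; split; [exact: sm0| rewrite (slin0 hpsi)].
  move=> a x y [l [hl ->]] [l2 [hl2 ->]]; exists (a *: l + l2); split; first exact: hL'.2.
  by rewrite hpsi.
have hT : submod T.
  split; first by exists 0; split; [exact: sm0| rewrite (slin0 hphi)].
  move=> a x y [l [hl ->]] [l2 [hl2 ->]]; exists (a *: l + l2); split; first exact: hT'.2.
  by rewrite hphi.
have hdec : forall x, exists l t, L l /\ T t /\ x = l + t.
  move=> y; rewrite -(csurj y); set x := r _.
  exists (psi (pL x + lam (pT x))), (phi (pT x)); split.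
    exists (pL x + lam (pT x)); split=> //; apply: (smD hL') => //; exact: pLs.
  by split=> //; exists (pT x).
have huniq : forall l t, L l -> T t -> l + t = 0 -> l = 0 /\ t = 0.
  move=> _ _ [l [hl ->]] [t [ht ->]] e0.
  have hlx : L' (l - lam t) by apply: (smB hL') => //; exact: pLs.
  have [e1 e2] := piL_eq hL' hT' hdec' huniq' hlx ht (erefl (l - lam t + t)).
  have hx : chi (l - lam t + t) = chi 0.
    rewrite (slin0 hchi) /chi.
    have -> : pL (l - lam t + t) = l - lam t by exact: e1.
    have -> : pT (l - lam t + t) = t by exact: e2.
    by rewrite subrK.
  have x0 := cinj _ _ hx.
  have [e3 e4] := dec_uniq hL' hT' huniq' hlx ht (sm0 hL') (sm0 hT') (etrans x0 (esym (addr0 0))).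
  have lam0 : lam 0 = 0 by exact: slin0.
  rewrite e4 lam0 subr0 in e3.
  by rewrite e3 e4 (slin0 hpsi) (slin0 hphi).
exists L, T; do 4!split=> //.
have hnL := piL_lin hL hT hdec huniq.
have hnT := piT_lin hL hT hdec huniq.
move=> x; split.
  move=> hx; have [y1 [y2 [[l [hl e1]] [hy2 e]]]] := hdec x.
  exists y1, y2; split; first by exists l.
  split=> //.
  have hW2 : W y2 by rewrite -[y2](addKr y1) -e; apply: (smD hW); [apply: (smN hW); rewrite e1| ].
  have hIy : IP y2 by apply: hcap => //; case: hy2 => t [_ ->].
  have <- : piT hdec y2 = y2 by exact: (piL_eq hL hT hdec huniq (sm0 hL) hy2 (esym (add0r _))).2.
  apply: (im_lin hnT) hIy => u _; exact: (piL_spec hdec u).2.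
move=> [l [t [[l0 [hl0 ->]] [ht ->]]]]; apply: (smD hW) => //.
by apply: hIW; apply: im_mono ht.
Qed.
End Lift.

Section Hodge.
Variables (S : comUnitRingType) (p : nat) (F F' : frame S p).
Hypothesis hinc : forall a, fI F a -> fI F' a.

Lemma hodge_good (P : window F) (P' : window F') (u : wP P -> wP P') :
  bc_good P P' u -> lifts_hodge (fI F) P' (hodge_image P u).
Proof.
move=> [hu [w [hw [wu [uw hQ']]]]]; have [lu [qu _]] := hu.
have hI := fI_ideal F; have hI' := fI_ideal F'.
have [L [T [hL [hT [hdec [huniq hQ]]]]]] := @wdecomp _ _ _ P.
have hQs := @wQ_submod _ _ _ P.
have hIP' : submod (ideal_mul (fI F) (fun _ : wP P' => True)) by exact: im_submod.
have hIP : submod (ideal_mul (fI F) (fun _ : wP P => True)) by exact: im_submod.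
have hH : submod (hodge_image P u).
  split.
    exists 0, 0; split; first exact: sm0.
    by split; [exact: im0| rewrite (slin0 lu) addr0].
  move=> a x y [q [z [hq [hz ->]]]] [q2 [z2 [hq2 [hz2 ->]]]].
  exists (a *: q + q2), (a *: z + z2); split; first exact: hQs.2.
  by split; [exact: hIP'.2| rewrite lu scalerDr addrACA].
split=> //.
split.
  by move=> x hx; exists 0, x; split; [exact: sm0| split=> //; rewrite (slin0 lu) add0r].
split.
  exists (fun x => exists t z, T t /\ ideal_mul (fI F) (fun _ => True) z /\ x = u t + z).
  split.
    split.
      exists 0, 0; split; first exact: sm0.
      by split; [exact: im0| rewrite (slin0 lu) addr0].
    move=> a x y [q [z [hq [hz ->]]]] [q2 [z2 [hq2 [hz2 ->]]]].
    exists (a *: q + q2), (a *: z + z2); split; first exact: hT.2.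
    by split; [exact: hIP'.2| rewrite lu scalerDr addrACA].
  split.
    by move=> x hx; exists 0, x; split; [exact: sm0| split=> //; rewrite (slin0 lu) add0r].
  split.
    move=> y; have [l [t [hl [ht e]]]] := hdec (w y).
    exists (u l), (u t); split.
      exists l, 0; split; first by apply/hQ; exists l, 0; rewrite addr0; split=> //; split=> //; exact: im0.
      by split; [exact: im0| rewrite addr0].
    split; first by exists t, 0; split=> //; split; [exact: im0| rewrite addr0].
    by rewrite -(slinD lu) -e uw.
  move=> x [q [z [hq [hz ex]]]] [t [z' [ht [hz' ex']]]].
  have [l [t1 [hl [ht1 eq]]]] := (proj1 (hQ q)) hq.
  have hpl := piL_lin hL hT hdec huniq.
  have hwz : ideal_mul (fI F) (fun _ => True) (w z) by apply: IP_map.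
  have hwz' : ideal_mul (fI F) (fun _ => True) (w z') by apply: IP_map.
  have e1 : piL hdec q = l := (piL_eq hL hT hdec huniq hl (IT_T hT hI ht1) eq).1.
  have e2 : piL hdec t = 0 := (piL_eq hL hT hdec huniq (sm0 hL) ht (esym (add0r t))).1.
  have el : l = piL hdec (w z') - piL hdec (w z).
    have : piL hdec (w x) = piL hdec (w x) by [].
    rewrite {1}ex {1}ex' !(slinD hw) !wu !(slinD hpl) e1 e2 add0r.
    by move=> <-; rewrite addrK.
  have hl' : ideal_mul (fI F) (fun _ => True) l.
    by rewrite el; apply: (smB hIP); apply: (IP_map hpl).
  rewrite ex eq (slinD lu); apply: (smD hIP') => //; apply: (smD hIP'); apply: (IP_map lu) => //.
  by apply: im_mono ht1.
move=> x; split.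
  move=> /hQ' [q [z [hq [hz e]]]].
  exists (u q), (u z); split; first by exists q, 0; split=> //; split; [exact: im0| rewrite addr0].
  by split; [apply: IP_map| rewrite -(slinD lu) -e uw].
move=> [_ [z [[q [z0 [hq [hz0 ->]]]] [hz ->]]]].
apply/hQ'; exists q, (w z0 + w z); split=> //; split.
  apply: (smD (im_submod hI' _)); last by apply: IP_map.
  by apply: (im_mono hinc) => //; apply: IP_map.
by rewrite !(slinD hw) wu addrA.
Qed.
End Hodge.

Lemma ff_good (S : comUnitRingType) (p : nat) (F F' : frame S p)
  (P1 P2 : window F) (P1' P2' : window F')
  (u1 : wP P1 -> wP P1') (u2 : wP P2 -> wP P2') :
  bc_good P1 P1' u1 -> bc_good P2 P2' u2 ->
  forall g : wP P1' -> wP P2', wmap g ->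
    (pair_hom (hodge_image P1 u1) (hodge_image P2 u2) g <->
       exists f : wP P1 -> wP P2, wmap f /\ forall x, g (u1 x) = u2 (f x)) /\
    (forall f1 f2 : wP P1 -> wP P2, wmap f1 -> wmap f2 ->
       (forall x, g (u1 x) = u2 (f1 x)) -> (forall x, g (u1 x) = u2 (f2 x)) ->
       forall x, f1 x = f2 x).
Proof.
move=> [hu1 [w1 [hw1 [wu1 [uw1 hQ1]]]]] [hu2 [w2 [hw2 [wu2 [uw2 hQ2]]]]] g hg.
have [lu1 [qu1 [fu1 f1u1]]] := hu1; have [lu2 [qu2 [fu2 f1u2]]] := hu2.
have [lg [qg [fg f1g]]] := hg.
split; last first.
  by move=> f1 f2 _ _ e1 e2 x; rewrite -(wu2 (f1 x)) -(wu2 (f2 x)) -e1 -e2.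
split.
  move=> [_ hgH].
  have hQf : forall q, wQ P1 q -> wQ P2 (w2 (g (u1 q))).
    move=> q hq; have [q2 [z [hq2 [hz e]]]] : hodge_image P2 u2 (g (u1 q)).
      by apply: hgH; exists q, 0; split=> //; split; [exact: im0| rewrite addr0].
    rewrite e (slinD hw2) wu2; apply: smD; first exact: wQ_submod.
      by [].
    by apply: IP_Q; apply: IP_map.
  exists (w2 \o g \o u1); split; last by move=> x /=; rewrite uw2.
  split; first by apply: slin_comp => //; apply: slin_comp.
  split; first exact: hQf.
  split.
    by move=> x /=; rewrite fu1 fg -{1}(uw2 (g (u1 x))) -fu2 wu2.
  move=> q hq /=; rewrite f1u1 // f1g; last exact: qu1.
  by rewrite -{1}(uw2 (g (u1 q))) -f1u2 ?wu2 //; exact: hQf.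
move=> [f [hf e]]; split=> //.
have [lf [qf _]] := hf.
move=> x [q [z [hq [hz ->]]]]; exists (f q), (g z); split; first exact: qf.
by split; [apply: IP_map| rewrite (slinD lg) e].
Qed.

Section ES.
Variables (S : comUnitRingType) (p : nat) (F F' : frame S p).
Hypothesis halpha : strict_id_hom F F'.
Variables (P' : window F') (W W' : wP P' -> Prop).
Hypotheses (hW : submod W) (hIW : forall x, ideal_mul (fI F) (fun _ => True) x -> W x)
  (hW' : submod W') (hIW' : forall x, ideal_mul (fI F) (fun _ => True) x -> W' x)
  (hsum : forall x, exists w w', W w /\ W' w' /\ x = w + w')
  (hcap : forall x, W x -> W' x -> ideal_mul (fI F) (fun _ => True) x)
  (hQW : forall x, wQ P' x <-> exists w z, W w /\ ideal_mul (fI F') (fun _ => True) z /\ x = w + z).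

Lemma es_WQ x : W x -> wQ P' x.
Proof. by move=> hx; apply/hQW; exists x, 0; rewrite addr0; split=> //; split=> //; exact: im0. Qed.

Lemma esF_lin a (x y : wP P') : wF P' (a *: x + y) = fsigma F a *: wF P' x + wF P' y.
Proof. by have [_ [hsig _]] := halpha; rewrite -hsig; exact: wF_lin. Qed.

Lemma esF1_lin a (x y : wP P') : W x -> W y ->
  wF1 P' (a *: x + y) = fsigma F a *: wF1 P' x + wF1 P' y.
Proof.
by have [_ [hsig _]] := halpha; move=> hx hy; rewrite -hsig; apply: wF1_lin; apply: es_WQ.
Qed.

Lemma esF1_F a (x : wP P') : fI F a -> wF1 P' (a *: x) = fsigma1 F a *: wF P' x.
Proof. by have [hinc [_ hsig1]] := halpha; move=> ha; rewrite wF1_F ?hsig1 //; apply: hinc. Qed.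

Lemma es_decomp : exists L T : wP P' -> Prop,
      submod L /\ submod T /\
      (forall x, exists l t, L l /\ T t /\ x = l + t) /\
      (forall l t, L l -> T t -> l + t = 0 -> l = 0 /\ t = 0) /\
      (forall x, W x <-> exists l t, L l /\ ideal_mul (fI F) T t /\ x = l + t).
Proof. exact: (lift_decomp hW hIW hW' hsum hcap hQW). Qed.

Lemma es_Fspan y : F1span W (wF P' y).
Proof.
have [hinc [_ hsig1]] := halpha.
have [n [c [x [hx hs]]]] := fgen F.
exists n, c, (fun j => x j *: y); split.
  by move=> j; apply: hIW; apply: imZt.
rewrite -{1}(scale1r (wF P' y)) -hs scaler_suml; apply: eq_bigr => j _.
by rewrite -scalerA wF1_F ?hsig1 //; apply: hinc.
Qed.

Lemma esF1_gen x : exists (n : nat) (c : 'I_n -> S) (q : 'I_n -> wP P'),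
      (forall i, W (q i)) /\ x = \sum_(i < n) c i *: wF1 P' (q i).
Proof.
have [n [c [q [hq ->]]]] := wF1_gen x.
apply: span_sum => i; apply: spanZ.
have := hq i; move=> /hQW [w [z [hw [hz ->]]]].
have hzQ : wQ P' z by apply: IP_Q.
rewrite wF1D //; last exact: es_WQ.
apply: spanD; first exact: span_gen.
have [m [a [t [ha ->]]]] := IP_decomp hz.
rewrite F1_IP //; apply: span_sum => k; apply: spanZ; exact: es_Fspan.
Qed.

Definition esW : window F :=
  @Window S p F (wP P') W (wF P') (wF1 P') (wP_fgproj P') esF_lin esF1_lin es_decomp esF1_F esF1_gen.

Lemma es_bc : is_base_change esW P' id.
Proof.
have hid : wmap (id : wP esW -> wP P').
  split; first exact: slin_id.
  split; first exact: es_WQ.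
  by split.
have hw : slin (id : wP P' -> wP esW) by exact: slin_id.
apply: (@univ _ _ F F' esW P' id id hid hw) => //.
by move=> y /hQW.
Qed.

Lemma es_hodge x : W x <-> hodge_image esW id x.
Proof.
split; first by move=> hx; exists x, 0; rewrite addr0; split=> //; split=> //; exact: im0.
by move=> [q [z [hq [hz ->]]]]; apply: (smD hW) => //; apply: hIW.
Qed.
End ES.

Unset Implicit Arguments.
Theorem lemma4p2 (S : comUnitRingType) (p : nat) (hp : prime p)
    (F F' : frame S p) (halpha : strict_id_hom F F') :
  (* R -> R' is (well defined and) surjective, and I is contained in I' *)
  quot_map_wd_surj (fI F) (fI F') /\
  (forall a, fI F a -> fI F' a) /\
  (* the functor P |-> (alpha_* P, Q/IP) is well defined on objects *)
  (forall P : window F, exists (P' : window F') (u : wP P -> wP P'),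
      is_base_change P P' u) /\
  (forall (P : window F) (P' : window F') (u : wP P -> wP P'),
      is_base_change P P' u -> lifts_hodge (fI F) P' (hodge_image P u)) /\
  (* ... and fully faithful: for base changes u1, u2, window morphisms
     f : P1 -> P2 correspond bijectively (via g o u1 = u2 o f) to morphisms
     of pairs g *)
  (forall (P1 P2 : window F) (P1' P2' : window F')
      (u1 : wP P1 -> wP P1') (u2 : wP P2 -> wP P2'),
      is_base_change P1 P1' u1 -> is_base_change P2 P2' u2 ->
      forall g : wP P1' -> wP P2', wmap g ->
        (pair_hom (hodge_image P1 u1) (hodge_image P2 u2) g <->
           exists f : wP P1 -> wP P2, wmap f /\ forall x, g (u1 x) = u2 (f x)) /\
        (forall f1 f2 : wP P1 -> wP P2, wmap f1 -> wmap f2 ->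
           (forall x, g (u1 x) = u2 (f1 x)) -> (forall x, g (u1 x) = u2 (f2 x)) ->
           forall x, f1 x = f2 x)) /\
  (* ... and essentially surjective *)
  (forall (P' : window F') (W : wP P' -> Prop),
      lifts_hodge (fI F) P' W ->
      exists (P : window F) (u : wP P -> wP P'),
        is_base_change P P' u /\ forall x, W x <-> hodge_image P u x).
Proof.
have hinc := halpha.1.
split.
  split=> // s'; exists s'; rewrite subrr; exact: (id0 (fI_ideal F')).
split=> //.
split.
  move=> P.
  have [n [i [r [hi [hr hri]]]]] := wP_fgproj P.
  have [L [T [hL [hT [hdec [huniq hQ]]]]]] := @wdecomp _ _ _ P.
  exists (bcW halpha hi hr hri hL hT hdec huniq hQ), id.
  exact: bcW_bc.
split.
  move=> P P' u hbc; apply: hodge_good => //; exact: bc_good_of.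
split.
  move=> P1 P2 P1' P2' u1 u2 h1 h2; apply: ff_good; exact: bc_good_of.
move=> P' W [hW [hIW [[W' [hW' [hIW' [hsum hcap]]]] hQW]]].
exists (esW halpha hW hIW hW' hsum hcap hQW), id; split.
  exact: es_bc.
exact: es_hodge.
Qed.
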